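(* Consider the equation $x'(t)+p(t)\,x(\tau(t))=0$, $t\ge t_0$, where $p,\tau:[t_0,\infty)\to[0,\infty)$ are continuous, $\tau(t)\le t$ and $\lim_{t\to\infty}\tau(t)=\infty$. Let $\sigma:[t_0,\infty)\to\mathbb{R}$ be continuous and non-decreasing with $\tau(t)\le\sigma(t)\le t$ for $t\ge t_0$. If $$\limsup_{t\to+\infty}\int_{\sigma(t)}^{t}p(s)\exp\Bigg(\int_{\tau(s)}^{\sigma(t)}p(\xi)\exp\bigg(\int_{\tau(\xi)}^{\xi}p(u)\,du\bigg)d\xi\Bigg)ds>1,$$ then all solutions of this equation oscillate.
   Context: A solution is a function $x\in C([T_0,\infty);\mathbb{R})$ for some $T_0\ge t_0$, continuously differentiable on $[\tau_{(-1)}(T_0),\infty)$ where $\tau_{(-1)}(t)=\sup\{s:\tau(s)\le t\}$, satisfying the equation for $t\ge\tau_{(-1)}(T_0)$. It is oscillatory if it has arbitrarily large zeros; ''all solutions oscillate'' means every solution is oscillatory. *)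

(* Defs.v *)
From Stdlib Require Import Reals Lra ClassicalEpsilon.
Open Scope R_scope.

(* Total (oriented) Riemann integral: the value of RiemannInt when f is
   Riemann integrable between a and b, and 0 otherwise.  The value of
   RiemannInt does not depend on the integrability proof (RiemannInt_P5). *)
Definition Int (f : R -> R) (a b : R) : R :=
  match excluded_middle_informative
          (exists v, exists pr : Riemann_integrable f a b, RiemannInt pr = v) with
  | left H => proj1_sig (constructive_indefinite_description _ H)
  | right _ => 0
  end.

Definition cont_from (a : R) (f : R -> R) : Prop :=
  forall t, a <= t -> limit1_in f (fun y => a <= y) (f t) t.

Definition deriv_from (a : R) (f d : R -> R) : Prop :=
  forall t, a <= t ->
    limit1_in (fun y => (f y - f t) / (y - t)) (fun y => a <= y /\ y <> t) (d t) t.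

(* limsup_{t -> +oo} F(t) > a, written out: inf_T sup_{t >= T} F(t) > a. *)
Definition limsup_gt (F : R -> R) (a : R) : Prop :=
  exists c, a < c /\ forall T, exists t, T <= t /\ c < F t.

(* Solution of x'(t) + p(t) x(tau(t)) = 0 : x continuous on [T0,+oo), with
   T0 >= t0, continuously differentiable on [T1,+oo) where
   T1 = tau_(-1)(T0) = sup {s >= t0 : tau(s) <= T0}, satisfying the equation
   for t >= T1 (the derivative -p(t) x(tau(t)) is then automatically continuous). *)
Definition is_solution (t0 : R) (p tau x : R -> R) : Prop :=
  exists T0 T1, t0 <= T0 /\
    is_lub (fun s => t0 <= s /\ tau s <= T0) T1 /\
    cont_from T0 x /\
    deriv_from T1 x (fun t => - (p t * x (tau t))).

Definition oscillatory (x : R -> R) : Prop :=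
  forall T, exists t, T <= t /\ x t = 0.

(* Main.v *)
From Pilot Require Import Defs.
From Stdlib Require Import Reals Lra Classical ClassicalEpsilon.
From Coquelicot Require Import Coquelicot.
Import Pilot.Defs.
Open Scope R_scope.

Lemma Int_spec (f : R -> R) (a b : R) : Int f a b = 0 \/ exists pr : Riemann_integrable f a b, Int f a b = RiemannInt pr.
Proof.
  unfold Int; destruct excluded_middle_informative as [H|H].
  - right. destruct constructive_indefinite_description as [v [pr Hv]]; simpl. exists pr; auto.
  - left; auto.
Qed.

Lemma cont_pt_of_from (a : R) (f : R -> R) (t : R) : cont_from a f -> a < t -> continuity_pt f t.
Proof.
  intros H Ht eps Heps. destruct (H t (Rlt_le _ _ Ht) eps Heps) as [alp [Halp H2]].
  exists (Rmin alp (t - a)). split. apply Rmin_glb_lt; lra.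
  intros x [_ Hx]. apply H2. simpl in *. unfold R_dist in *.
  assert (Hm1 := Rmin_l alp (t-a)). assert (Hm2 := Rmin_r alp (t-a)).
  split; [|lra]. apply Rabs_def2 in Hx. lra.
Qed.

Lemma deriv_pt_of_from (a : R) (f d : R -> R) (t : R) : deriv_from a f d -> a < t -> derivable_pt_lim f t (d t).
Proof.
  intros H Ht eps Heps. destruct (H t (Rlt_le _ _ Ht) eps Heps) as [alp [Halp H2]].
  assert (Hp : 0 < Rmin alp (t - a)) by (apply Rmin_glb_lt; lra).
  exists (mkposreal _ Hp). intros h Hh Hh2. simpl in Hh2.
  assert (Hm1 := Rmin_l alp (t-a)). assert (Hm2 := Rmin_r alp (t-a)).
  specialize (H2 (t + h)). simpl in H2. unfold R_dist in H2.
  replace (t + h - t) with h in H2 by ring. apply H2.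
  apply Rabs_def2 in Hh2. repeat split; try lra.
  replace (t + h - t) with h by ring. destruct (Rle_dec 0 h). rewrite Rabs_right; lra. rewrite Rabs_left; lra.
Qed.

Lemma KL (Phi psi f : R -> R) (a b : R) : a <= b ->
  (forall u, a <= u <= b -> derivable_pt_lim Phi u (- psi u)) ->
  (forall u, a <= u <= b -> continuity_pt psi u) ->
  (forall u, a <= u <= b -> 0 <= psi u) ->
  (forall u, a < u < b -> f u <= psi u) ->
  0 <= Phi a - Phi b /\ Int f a b <= Phi a - Phi b.
Proof.
  intros Hab Hd Hc Hn Hf.
  assert (Hi : is_RInt (fun u => - psi u) a b (minus (Phi b) (Phi a))).
  { apply (@is_RInt_derive R_CompleteNormedModule); rewrite Rmin_left, Rmax_right by lra; intros u Hu.
    - apply is_derive_Reals. apply Hd; auto.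
    - apply continuity_pt_filterlim. apply (continuity_pt_opp psi). auto. }
  apply is_RInt_opp in Hi.
  assert (Hi2 : is_RInt psi a b (Phi a - Phi b)).
  { replace (Phi a - Phi b) with (opp (minus (Phi b) (Phi a))) by (rewrite opp_minus; reflexivity).
    eapply is_RInt_ext; [|exact Hi]. intros u _. unfold opp; simpl; ring.
    }
  assert (prp : Riemann_integrable psi a b) by (apply continuity_implies_RiemannInt; auto).
  assert (Hv : RiemannInt prp = Phi a - Phi b).
  { rewrite <- RInt_Reals. apply is_RInt_unique. exact Hi2. }
  assert (H0 : 0 <= Phi a - Phi b).
  { rewrite <- Hv, <- RInt_Reals. apply RInt_ge_0; auto. apply ex_RInt_Reals_1; auto.
    intros; apply Hn; lra. }
  split; auto.
  destruct (Int_spec f a b) as [E|[pr E]]; rewrite E; auto.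
  rewrite <- Hv. apply RiemannInt_P19; auto.
Qed.

Lemma exp_le (u v : R) : u <= v -> exp u <= exp v.
Proof. intros [H|H]. left; apply exp_increasing; auto. rewrite H; lra. Qed.

Lemma exp_ln_ratio (u v : R) : 0 < u -> 0 < v -> exp (ln u - ln v) = u / v.
Proof. intros; rewrite <- ln_div by auto. apply exp_ln. apply Rdiv_lt_0_compat; auto. Qed.

Lemma main_pos (t0 : R) (p tau sigma y : R -> R) (T1 N : R) :
  cont_from t0 p -> cont_from t0 tau ->
  (forall t, t0 <= t -> 0 <= p t) ->
  (forall t, t0 <= t -> tau t <= t) ->
  (forall M, exists T, t0 <= T /\ M <= T /\ forall t, T <= t -> M <= tau t) ->
  (forall a b, t0 <= a -> a <= b -> sigma a <= sigma b) ->
  (forall t, t0 <= t -> tau t <= sigma t /\ sigma t <= t) ->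
  limsup_gt
    (fun t => Int (fun s => p s * exp (Int (fun xi => p xi * exp (Int p (tau xi) xi))
                                            (tau s) (sigma t)))
                  (sigma t) t) 1 ->
  (forall u, T1 < u -> derivable_pt_lim y u (-(p u * y (tau u)))) ->
  (forall u, N <= u -> 0 < y u) -> False.
Proof.
  intros Hpc Htc Hp0 Htle Hinf Hsm Hsig Hls Hd Hy.
  set (C0 := Rmax N (Rmax (T1+1) (t0+1))).
  assert (HC0a : N <= C0) by (unfold C0; apply Rmax_l).
  assert (HC0b : T1 + 1 <= C0) by (unfold C0; eapply Rle_trans; [apply Rmax_l|apply Rmax_r]).
  assert (HC0c : t0 + 1 <= C0) by (unfold C0; eapply Rle_trans; [apply Rmax_r|apply Rmax_r]).
  assert (Hypos : forall u, C0 <= u -> 0 < y u) by (intros; apply Hy; lra).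
  assert (Hyc : forall u, C0 <= u -> continuity_pt y u).
  { intros u Hu. apply derivable_continuous_pt. exists (-(p u * y (tau u))). apply Hd; lra. }
  assert (Hpcc : forall u, C0 <= u -> continuity_pt p u).
  { intros u Hu. apply (cont_pt_of_from t0); auto; lra. }
  assert (Htcc : forall u, C0 <= u -> continuity_pt tau u).
  { intros u Hu. apply (cont_pt_of_from t0); auto; lra. }
  destruct (Hinf C0) as [C [HC1 [HC2 HC3]]].
  set (psi0 := fun u => p u * y (tau u)).
  assert (Hpsi0c : forall u, C <= u -> continuity_pt psi0 u).
  { intros u Hu. unfold psi0. apply continuity_pt_mult. apply Hpcc; lra.
    change (continuity_pt (comp y tau) u). apply continuity_pt_comp. apply Htcc; lra.
    apply Hyc; auto. }
  assert (Hpsi0n : forall u, C <= u -> 0 <= psi0 u).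
  { intros u Hu. unfold psi0. apply Rmult_le_pos. apply Hp0; lra. left; apply Hypos; auto. }
  assert (Hmono : forall a b, C <= a -> a <= b -> y b <= y a).
  { intros a b Ha Hab.
    destruct (KL y psi0 (fun _ => 0) a b Hab) as [H _].
    - intros u Hu. apply Hd; lra.
    - intros u Hu; apply Hpsi0c; lra.
    - intros u Hu; apply Hpsi0n; lra.
    - intros u Hu; apply Hpsi0n; lra.
    - lra. }
  set (L := fun u => ln (y u)).
  set (g := fun u => p u * y (tau u) / y u).
  assert (HLd : forall u, C <= u -> derivable_pt_lim L u (- g u)).
  { intros u Hu. unfold L, g.
    replace (- (p u * y (tau u) / y u)) with (/ y u * (- (p u * y (tau u)))) by (field; apply Rgt_not_eq, Hypos; lra).
    change (derivable_pt_lim (comp ln y) u (/ y u * - (p u * y (tau u)))).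
    apply derivable_pt_lim_comp. apply Hd; lra. apply derivable_pt_lim_ln. apply Hypos; lra. }
  assert (Hgc : forall u, C <= u -> continuity_pt g u).
  { intros u Hu. unfold g. change (continuity_pt (psi0 / y)%F u).
    apply continuity_pt_div. apply Hpsi0c; auto. apply Hyc; lra. apply Rgt_not_eq, Hypos; lra. }
  assert (Hgn : forall u, C <= u -> 0 <= g u).
  { intros u Hu. unfold g. apply Rdiv_le_0_compat. apply (Hpsi0n u Hu). apply Hypos; lra. }
  destruct (Hinf C) as [E [HE1 [HE2 HE3]]].
  destruct (Hinf E) as [F [HF1 [HF2 HF3]]].
  destruct (Hinf F) as [G [HG1 [HG2 HG3]]].
  destruct (Hinf G) as [H [HH1 [HH2 HH3]]].
  assert (Hpg : forall u, E <= u -> p u <= g u).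
  { intros u Hu. unfold g. assert (Hyu := Hypos u ltac:(lra)).
    assert (Hm := Hmono (tau u) u (HE3 u Hu) (Htle u ltac:(lra))).
    assert (Hpu := Hp0 u ltac:(lra)).
    apply (Rmult_le_reg_r (y u)); auto. unfold Rdiv. rewrite Rmult_assoc, Rinv_l by lra.
    rewrite Rmult_1_r. apply Rmult_le_compat_l; auto. }
  set (h := fun xi => p xi * exp (Int p (tau xi) xi)).
  assert (Hhg : forall xi, F <= xi -> h xi <= g xi).
  { intros xi Hxi. unfold h.
    destruct (KL L g p (tau xi) xi) as [_ HK].
    - apply Htle; lra.
    - intros u Hu. apply HLd. assert (E <= tau xi) by (apply HF3; lra). lra.
    - intros u Hu. apply Hgc. assert (E <= tau xi) by (apply HF3; lra). lra.
    - intros u Hu. apply Hgn. assert (E <= tau xi) by (apply HF3; lra). lra.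
    - intros u Hu. apply Hpg. assert (E <= tau xi) by (apply HF3; lra). lra.
    - unfold g. assert (HE := HF3 xi Hxi).
      unfold L in HK.
      replace (p xi * y (tau xi) / y xi) with (p xi * (y (tau xi) / y xi)) by (unfold Rdiv; ring).
      rewrite <- (exp_ln_ratio (y (tau xi)) (y xi)) by (apply Hypos; lra).
      apply Rmult_le_compat_l. apply Hp0; lra. apply exp_le; exact HK. }
  destruct Hls as [c [Hc1 Hc]]. destruct (Hc H) as [t [Ht Hct]].
  change (c < Int (fun s => p s * exp (Int h (tau s) (sigma t))) (sigma t) t) in Hct.
  assert (Htt : G <= tau t) by (apply HH3; lra).
  destruct (Hsig t ltac:(lra)) as [Hs1 Hs2].
  set (c0 := y (sigma t)).
  assert (Hc0 : 0 < c0) by (apply Hypos; lra).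
  destruct (KL (fun u => / c0 * y u) (fun u => / c0 * psi0 u)
              (fun s => p s * exp (Int h (tau s) (sigma t))) (sigma t) t Hs2) as [_ HK].
  - intros u Hu. replace (- (/ c0 * psi0 u)) with (/ c0 * (- (p u * y (tau u)))) by (unfold psi0; ring).
    change (derivable_pt_lim (mult_real_fct (/ c0) y) u (/ c0 * - (p u * y (tau u)))).
    apply derivable_pt_lim_scal. apply Hd; lra.
  - intros u Hu. change (continuity_pt (mult_real_fct (/ c0) psi0) u).
    apply continuity_pt_scal. apply Hpsi0c; lra.
  - intros u Hu. apply Rmult_le_pos. left; apply Rinv_0_lt_compat; auto. apply Hpsi0n; lra.
  - intros s Hs. assert (HtsF : F <= tau s) by (apply HG3; lra).
    assert (Hts : tau s <= sigma t).
    { destruct (Hsig s ltac:(lra)) as [H1 _]. assert (sigma s <= sigma t) by (apply Hsm; lra). lra. }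
    destruct (KL L g h (tau s) (sigma t) Hts) as [_ HK].
    + intros u Hu; apply HLd; lra.
    + intros u Hu; apply Hgc; lra.
    + intros u Hu; apply Hgn; lra.
    + intros u Hu; apply Hhg; lra.
    + unfold L in HK. unfold psi0.
      replace (/ c0 * (p s * y (tau s))) with (p s * (y (tau s) / c0)) by (unfold Rdiv; ring).
      rewrite <- (exp_ln_ratio (y (tau s)) c0) by (apply Hypos; lra).
      apply Rmult_le_compat_l. apply Hp0; lra. apply exp_le; exact HK.
  - assert (Hyt : 0 < y t) by (apply Hypos; lra).
    assert (/ c0 * y t > 0) by (apply Rmult_lt_0_compat; auto; apply Rinv_0_lt_compat; auto).
    assert (/ c0 * c0 = 1) by (field; lra).
    fold c0 in HK. lra.
Qed.

Theorem corollary3p1 (t0 : R) (p tau sigma : R -> R) :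
  cont_from t0 p -> cont_from t0 tau ->
  (forall t, t0 <= t -> 0 <= p t) ->
  (forall t, t0 <= t -> 0 <= tau t) ->
  (forall t, t0 <= t -> tau t <= t) ->
  (forall M, exists T, forall t, t0 <= t -> T <= t -> M <= tau t) ->
  cont_from t0 sigma ->
  (forall a b, t0 <= a -> a <= b -> sigma a <= sigma b) ->
  (forall t, t0 <= t -> tau t <= sigma t /\ sigma t <= t) ->
  limsup_gt
    (fun t => Int (fun s => p s * exp (Int (fun xi => p xi * exp (Int p (tau xi) xi))
                                            (tau s) (sigma t)))
                  (sigma t) t) 1 ->
  forall x, is_solution t0 p tau x -> oscillatory x.
Proof.
  intros Hpc Htc Hp0 Ht0 Htle Hinf Hsc Hsm Hsig Hls x [T0 [T1 [_ [_ [_ Hder]]]]].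
  assert (Hinf' : forall M, exists T, t0 <= T /\ M <= T /\ forall t, T <= t -> M <= tau t).
  { intros M. destruct (Hinf M) as [T HT]. exists (Rmax T (Rmax t0 M)).
    assert (H1 := Rmax_l T (Rmax t0 M)). assert (H2 := Rmax_r T (Rmax t0 M)).
    assert (H3 := Rmax_l t0 M). assert (H4 := Rmax_r t0 M).
    repeat split; try lra. intros t Ht. apply HT; lra. }
  assert (Hd : forall u, T1 < u -> derivable_pt_lim x u (-(p u * x (tau u)))).
  { intros u Hu. exact (deriv_pt_of_from T1 x (fun t => - (p t * x (tau t))) u Hder Hu). }
  assert (Hxc : forall u, T1 < u -> continuity_pt x u).
  { intros u Hu. apply derivable_continuous_pt. exists (-(p u * x (tau u))). exact (Hd u Hu). }
  intros T. apply NNPP. intro Hn.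
  assert (Hnz : forall t, T <= t -> x t <> 0).
  { intros t Ht He. apply Hn. exists t; auto. }
  set (a := Rmax T (T1 + 1)).
  assert (Ha1 := Rmax_l T (T1 + 1)). assert (Ha2 := Rmax_r T (T1 + 1)). fold a in Ha1, Ha2.
  destruct (Rtotal_order (x a) 0) as [Hneg|[Hz|Hpos]].
  - apply (main_pos t0 p tau sigma (fun v => - x v) T1 a); auto.
    + intros u Hu. replace (- (p u * - x (tau u))) with (- (- (p u * x (tau u)))) by ring.
      change (derivable_pt_lim (- x)%F u (- - (p u * x (tau u)))).
      apply derivable_pt_lim_opp. auto.
    + intros u Hu. apply Ropp_0_gt_lt_contravar. destruct (Rlt_le_dec (x u) 0) as [H|H]; auto.
      exfalso. destruct H as [H|H]; [|apply (Hnz u); lra].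
      assert (Hau : a < u) by (destruct Hu as [Hu|Hu]; auto; subst; lra).
      destruct (Ranalysis5.IVT_interv x a u) as [z [Hz1 Hz2]].
      { intros v Hv; apply Hxc; lra. }
      { exact Hau. } { exact Hneg. } { lra. }
      apply (Hnz z); [lra|exact Hz2].
  - apply (Hnz a); auto.
  - apply (main_pos t0 p tau sigma x T1 a); auto.
    intros u Hu. destruct (Rlt_le_dec 0 (x u)) as [H|H]; auto.
    exfalso. destruct H as [H|H]; [|apply (Hnz u); lra].
    assert (Hau : a < u) by (destruct Hu as [Hu|Hu]; auto; subst; lra).
    destruct (Ranalysis5.IVT_interv (- x)%F a u) as [z [Hz1 Hz2]].
    { intros v Hv; apply continuity_pt_opp; apply Hxc; lra. }
    { exact Hau. } { unfold opp_fct; lra. } { unfold opp_fct; lra. }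
    apply (Hnz z); [lra|]. unfold opp_fct in Hz2; lra.
Qed.
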